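(* Let $n\ge 2$ and $k\ge 1$ be integers with $k<n$. Then the cubical set $$\bigcup_{i=1}^k\ \bigcup_{j\in[n],\ j\neq i}\big|[\{i\},[n]\setminus\{j\}]\big|\subseteq\mathbb R^n$$ is acyclic.
   Context: $[n]=\{1,\dots,n\}$, and for $A\subseteq B\subseteq[n]$, $[A,B]=\{C: A\subseteq C\subseteq B\}$. Its geometric realization $|[A,B]|$ is $I_1\times\dots\times I_n\subseteq\mathbb R^n$ with $I_m=\{1\}$ if $m\in A$, $I_m=[0,1]$ if $m\in B\setminus A$, $I_m=\{0\}$ if $m\notin B$. A cubical set (finite union of elementary cubes, i.e. products of intervals $[a,b]$ with $a,b\in\mathbb Z$, $b-a\in\{0,1\}$) $X$ is acyclic if it is non-empty and connected and its cubical homology groups $H_i(X)$ are trivial for all $i\ge1$. *)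

(* Defs.v *)
From HB Require Import structures.
From mathcomp Require Import all_boot all_order all_algebra.
From mathcomp Require Import all_classical all_reals topology normedtype.
Set Implicit Arguments. Unset Strict Implicit. Unset Printing Implicit Defensive.
Import Order.TTheory GRing.Theory Num.Theory numFieldTopology.Exports numFieldNormedType.Exports.
Local Open Scope ring_scope.
Local Open Scope classical_set_scope.

(* R^n is represented by row vectors 'rV[R]_n, with the product topology;
   coordinate m (0-indexed, m : 'I_n) of x is x ord0 m.
   The paper's [n] = {1,...,n} is represented by 'I_n = {0,...,n-1}. *)

Definition bool_interval_real (R : realType) (n : nat) (A B : {set 'I_n})
  : set 'rV[R]_n :=
  [set x | forall m : 'I_n,
     (m \in A -> x ord0 m = 1) /\
     (m \in B -> m \notin A -> 0 <= x ord0 m <= 1) /\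
     (m \notin B -> x ord0 m = 0)].

(* Elementary cubes in R^n: a product of intervals I_m = [a_m, a_m + e_m]
   with a_m an integer and e_m in {0,1}; encoded by (a_m, e_m). *)
Definition cube (n : nat) := {ffun 'I_n -> int * bool}.

Definition cube_real (R : realType) (n : nat) (Q : cube n) : set 'rV[R]_n :=
  [set x | forall m : 'I_n,
     ((Q m).1)%:~R <= x ord0 m <= ((Q m).1)%:~R + ((Q m).2)%:R].

Definition cube_dim (n : nat) (Q : cube n) : nat := #|[set m | (Q m).2]|.

Definition chain (n : nat) := cube n -> int.

Definition is_chain (R : realType) (n : nat) (X : set 'rV[R]_n) (k : nat)
  (c : chain n) : Prop :=
  (exists s : seq (cube n), forall Q, c Q != 0 -> Q \in s) /\
  (forall Q, c Q != 0 -> cube_dim Q = k /\ cube_real (R:=R) Q `<=` X).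

Definition cube_set (n : nat) (P : cube n) (m : 'I_n) (v : int * bool) : cube n :=
  [ffun l => if l == m then v else P l].

Definition nondeg_before (n : nat) (P : cube n) (m : 'I_n) : nat :=
  #|[set l : 'I_n | (l < m)%N && (P l).2]|.

(* Cubical boundary (Kaczynski–Mischaikow–Mrozek):
     d(I_1 x ... x I_n) = sum_{m, I_m = [a,a+1]} (-1)^(#nondeg before m)
                          (I_1 x ..x [a+1] x.. I_n  -  I_1 x ..x [a] x.. I_n).
   Written through coefficients: the coefficient of an elementary cube P in dc
   collects the two cofaces of P in each degenerate coordinate m = [a,a]:
   [a-1,a] (P is its upper face, sign +) and [a,a+1] (P is its lower face,
   sign -). *)
Definition bdry (n : nat) (c : chain n) : chain n := fun P =>
  \sum_(m < n | ~~ (P m).2)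
     (-1) ^+ (nondeg_before P m) *
     (c (cube_set P m (((P m).1 - 1)%R, true)) - c (cube_set P m ((P m).1, true))).

Definition homology_trivial (R : realType) (n : nat) (X : set 'rV[R]_n) (k : nat)
  : Prop :=
  forall c : chain n, is_chain X k c -> bdry c = (fun _ => 0) ->
    exists d : chain n, is_chain X k.+1 d /\ bdry d = c.

Definition acyclic (R : realType) (n : nat) (X : set 'rV[R]_n) : Prop :=
  X !=set0 /\ connected X /\ forall k : nat, (1 <= k)%N -> homology_trivial X k.

(* The cubical set of the statement:
   union over i in {1..k} and j in [n], j <> i, of |[{i}, [n] \ {j}]|.
   (0-indexed: i ranges over 'I_n with i < k.) *)
Definition lemma3_set (R : realType) (n k : nat) : set 'rV[R]_n :=
  \bigcup_(i in [set i : 'I_n | (i < k)%N])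
    \bigcup_(j in [set j : 'I_n | j != i])
      bool_interval_real (R:=R) [set i] (~: [set j]).

(* Main.v *)
Require Import Defs.
From HB Require Import structures.
From mathcomp Require Import all_boot all_order all_algebra.
From mathcomp Require Import all_classical all_reals topology normedtype.
From mathcomp Require Import zify ring lra.
Set Implicit Arguments. Unset Strict Implicit. Unset Printing Implicit Defensive.
Import Order.TTheory GRing.Theory Num.Theory numFieldTopology.Exports numFieldNormedType.Exports.
Local Open Scope ring_scope.

Section Comb.
Variable n : nat.
Implicit Types (P Q : cube n) (c d : chain n) (l m : 'I_n).
Implicit Types (t : bool).

Lemma csE P m v l : cube_set P m v l = if l == m then v else P l.
Proof. by rewrite /cube_set ffunE. Qed.

Lemma cs_comm P l m v w : l != m ->
  cube_set (cube_set P l v) m w = cube_set (cube_set P m w) l v.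
Proof.
move=> nlm; apply/ffunP => x; rewrite !csE.
case: (eqVneq x m) => [xm|]; case: (eqVneq x l) => // xl.
by move: nlm; rewrite -xl xm eqxx.
Qed.

Lemma cs_cs P m v w : cube_set (cube_set P m v) m w = cube_set P m w.
Proof. by apply/ffunP => x; rewrite !csE; case: eqP. Qed.

Lemma cs_id P m : cube_set P m (P m) = P.
Proof. by apply/ffunP => x; rewrite !csE; case: eqP => // ->. Qed.

Lemma cs_same P m v : cube_set P m v m = v.
Proof. by rewrite csE eqxx. Qed.

Lemma cs_other P m v l : l != m -> cube_set P m v l = P l.
Proof. by rewrite csE => /negbTE ->. Qed.

Lemma card_setE (p : pred 'I_n) : #|[set l | p l]| = (\sum_(l < n) p l)%N.
Proof.
rewrite -sum1_card big_mkcond /=; apply: eq_bigr => i _.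
by rewrite inE; case: (p i).
Qed.

Lemma nbE P m : nondeg_before P m = (\sum_(l < n) ((l < m)%N && (P l).2))%N.
Proof.
rewrite /nondeg_before -sum1_card big_mkcond /=; apply: eq_bigr => i _.
case: (boolP (i \in _)) => [/set_mem -> // | H].
move: H; case E: (_ && _) => //; move=> /negP; case; apply/mem_set; exact: E.
Qed.

Lemma nb_cs P l v m :
  (nondeg_before (cube_set P l v) m + ((l < m)%N && (P l).2) =
   nondeg_before P m + ((l < m)%N && v.2))%N.
Proof.
rewrite !nbE (bigD1 l) //= [X in (_ = X + _)%N](bigD1 l) //=.
rewrite cs_same.
have -> : (\sum_(i < n | i != l) ((i < m)%N && (cube_set P l v i).2) =
          \sum_(i < n | i != l) ((i < m)%N && (P i).2))%N.
  by apply: eq_bigr => i il; rewrite cs_other.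
by rewrite addnC addnA [in RHS]addnAC.
Qed.

Definition sg P m : int := (-1) ^+ nondeg_before P m.

Lemma sg_sq P m : sg P m * sg P m = 1.
Proof. by rewrite /sg -expr2 sqrr_sign. Qed.

Lemma sg_cs P l v m :
  sg (cube_set P l v) m = sg P m * (-1) ^+ ((l < m)%N && ((P l).2 != v.2)).
Proof.
have := nb_cs P l v m => /(congr1 (fun k => (-1) ^+ k : int)).
rewrite !exprD /sg => E.
have s2 : forall b : bool, ((-1) ^+ b : int) * (-1) ^+ b = 1.
  by case => /=; rewrite ?expr1 ?expr0 ?mulN1r ?opprK ?mulr1.
apply: (@mulIf _ ((-1) ^+ ((l < m)%N && (P l).2))).
  by case: (_ && _); rewrite ?expr1 ?expr0 // oppr_eq0 oner_eq0.
rewrite E -mulrA; congr (_ * _).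
case: (l < m)%N; case: (P l).2; case: v.2 => //=; rewrite ?expr0 ?expr1 ?mulr1 ?mul1r //.
Qed.

Lemma sg_cs_same P m v : sg (cube_set P m v) m = sg P m.
Proof. by rewrite sg_cs ltnn /= expr0 mulr1. Qed.


Lemma bdryE c P : bdry c P = \sum_(l < n | ~~ (P l).2) sg P l *
   (c (cube_set P l ((P l).1 - 1, true)) - c (cube_set P l ((P l).1, true))).
Proof. by []. Qed.

Definition srcv (t : bool) : int * bool := ((if t then 0 else 1 : int), false).
Definition tgtv (t : bool) : int * bool := ((if t then 1 else 0 : int), false).

Definition hop t m c : chain n := fun P =>
  if P m == (0, true) then (-1) ^+ t * sg P m * c (cube_set P m (srcv t)) else 0.
Definition rop t m c : chain n := fun P =>
  if P m == tgtv t then c P + c (cube_set P m (srcv t)) else 0.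

Lemma sign_cancel l m : l != m ->
  ((-1) ^+ (l < m)%N : int) + (-1) ^+ (m < l)%N = 0.
Proof.
move=> lm; case: ltngtP => //=; rewrite ?expr0 ?expr1 ?addrN ?addNr //.
by move=> /val_inj E; rewrite E eqxx in lm.
Qed.

Lemma cancel_sum t m c P : P m = (0, true) ->
  \sum_(l < n | ~~ (P l).2) sg P l * (hop t m c (cube_set P l ((P l).1 - 1, true))
       - hop t m c (cube_set P l ((P l).1, true)))
  + (-1) ^+ t * sg P m * \sum_(l < n | ~~ (cube_set P m (srcv t) l).2 && (l != m))
      sg (cube_set P m (srcv t)) l *
      (c (cube_set (cube_set P m (srcv t)) l ((cube_set P m (srcv t) l).1 - 1, true))
     - c (cube_set (cube_set P m (srcv t)) l ((cube_set P m (srcv t) l).1, true))) = 0.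
Proof.
move=> E.
rewrite [X in _ + _ * X](eq_bigl (fun l => ~~ (P l).2)); last first.
  move=> l /=; case: (eqVneq l m) => [->|lm]; first by rewrite cs_same E.
  by rewrite cs_other // andbT.
rewrite big_distrr -big_split /=; apply: big1 => l Hl.
have lm : l != m by apply: contraNneq Hl => ->; rewrite E.
have ml : m != l by rewrite eq_sym.
rewrite /hop !cs_other // E eqxx !sg_cs E (negbTE Hl) /=.
rewrite !(cs_comm _ _ _ lm).
rewrite !andbT.
have -> : ((-1) ^+ (m < l)%N : int) = - (-1) ^+ (l < m)%N.
  by apply/eqP; rewrite -addr_eq0 addrC sign_cancel.
ring.
Qed.


Definition unitm m c := forall P, c P != 0 ->
  [|| P m == (0, false), P m == (1, false) | P m == (0, true)].

Lemma hopE0 t m c P : P m != (0, true) -> hop t m c P = 0.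
Proof. by rewrite /hop => /negbTE ->. Qed.
Lemma hopE1 t m c P : P m = (0, true) ->
  hop t m c P = (-1) ^+ t * sg P m * c (cube_set P m (srcv t)).
Proof. by rewrite /hop => ->; rewrite eqxx. Qed.

Lemma tf : (true == false) = false. Proof. by []. Qed.
Lemma ft : (false == true) = false. Proof. by []. Qed.

Lemma unit0 m c P : unitm m c ->
  ~~ [|| P m == (0, false), P m == (1, false) | P m == (0, true)] -> c P = 0.
Proof. by move=> U H; apply/eqP; apply: contraNT H; apply: U. Qed.

Lemma homotopy t m c : unitm m c -> forall P,
  bdry (hop t m c) P + hop t m (bdry c) P = c P - rop t m c P.
Proof.
move=> U P.
case E: (P m) => [a b]; case: b E => E.
- case: (eqVneq a 0) => [a0|an0].
  + subst a.
    have -> : rop t m c P = 0 by rewrite /rop E /tgtv xpair_eqE tf andbF.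
    rewrite subr0 {2}/hop E eqxx.
    rewrite (bdryE c (cube_set P m (srcv t))) (bigD1 m) /=; last by rewrite cs_same.
    rewrite mulrDr addrCA bdryE cancel_sum // addr0.
    rewrite cs_same !cs_cs sg_cs_same.
    have PE : cube_set P m (0, true) = P by rewrite -E cs_id.
    have Z : forall x : int, x != 0 -> c (cube_set P m (x, true)) = 0.
      move=> x x0; apply: (unit0 U); rewrite cs_same /= !xpair_eqE (negbTE x0); by case: (x == 1).
    case: t => /=.
      rewrite sub0r PE Z ?oppr_eq0 ?oner_eq0 // sub0r expr1.
      by rewrite mulN1r mulNr mulrA sg_sq mul1r opprK.
    rewrite subrr PE Z ?oner_eq0 // subr0 expr0 mul1r mulrA sg_sq mul1r //.
  + have -> : rop t m c P = 0 by rewrite /rop E /tgtv xpair_eqE tf andbF.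
    have -> : hop t m (bdry c) P = 0 by rewrite /hop E xpair_eqE (negbTE an0).
    rewrite addr0 subr0 (unit0 U); last by rewrite E !xpair_eqE /= !andbF /= andbT.
    rewrite bdryE big1 // => l Hl.
    have lm : l != m by apply: contraNneq Hl => ->; rewrite E.
    have ml : m != l by rewrite eq_sym.
    by rewrite !hopE0 ?subrr ?mulr0 // cs_other // E xpair_eqE (negbTE an0).
- rewrite (hopE0 t (bdry c) (P:=P)); last by rewrite E xpair_eqE ft andbF.
  rewrite addr0 bdryE (bigD1 m) /=; last by rewrite E.
  rewrite big1 ?addr0; last first.
    move=> l /andP [Hl lm]; have ml : m != l by rewrite eq_sym.
    by rewrite !hopE0 ?subrr ?mulr0 // cs_other // E xpair_eqE ft andbF.
  have PE : cube_set P m (a, false) = P by rewrite -E cs_id.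
  rewrite E /= /rop E.
  case: (eqVneq a 0) => [a0|a0]; [|case: (eqVneq a 1) => [a1|a1]].
  + subst a.
    rewrite (hopE0 t c (P:=cube_set P m (0 - 1, true))); last by rewrite cs_same.
    rewrite hopE1 ?cs_same // cs_cs sg_cs_same sub0r.
    case: t PE; rewrite /tgtv /srcv /= => PE.
      by rewrite PE subr0 expr1 mulN1r mulNr opprK mulrA sg_sq mul1r.
    by rewrite expr0 mul1r mulrN mulrA sg_sq mul1r opprD addrA subrr add0r.
  + subst a. rewrite subrr.
    rewrite (hopE0 t c (P:=cube_set P m (1, true))); last by rewrite cs_same.
    rewrite hopE1 ?cs_same // cs_cs sg_cs_same subr0.
    case: t PE; rewrite /tgtv /srcv /= => PE.
      by rewrite expr1 mulN1r mulNr mulrN mulrA sg_sq mul1r opprD addrA subrr add0r.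
    by rewrite expr0 mul1r mulrA sg_sq mul1r PE subr0.
  + rewrite !hopE0 ?cs_same ?xpair_eqE ?andbT ?subr_eq0 //.
    rewrite subrr mulr0 (unit0 U); last by rewrite E !xpair_eqE (negbTE a0) (negbTE a1) ft andbF.
    by case: t; rewrite ?(negbTE a0) ?(negbTE a1) subr0.
Qed.


Lemma sum_antisym (p : pred 'I_n) (F : 'I_n -> 'I_n -> int) :
  (forall l l', l != l' -> F l l' = - F l' l) ->
  \sum_(l < n | p l) \sum_(l' < n | p l' && (l' != l)) F l l' = 0.
Proof.
move=> A.
set T := \sum_(l < n) \sum_(l' < n) (if p l && p l' && (l' != l) then F l l' else 0).
have -> : \sum_(l < n | p l) \sum_(l' < n | p l' && (l' != l)) F l l' = T.
  rewrite /T big_mkcond /=; apply: eq_bigr => l _.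
  case: (p l) => /=; last by rewrite big1.
  by rewrite big_mkcond.
have E : T = - T.
  rewrite {1}/T exchange_big /= -sumrN; apply: eq_bigr => l _.
  rewrite -sumrN; apply: eq_bigr => l' _.
  case: (eqVneq l' l) => [->|ll]; first by rewrite !andbF oppr0.
  rewrite !andbT andbC; case: (_ && _); last by rewrite oppr0.
  by rewrite (A l' l) // opprK.
have : T + T = 0 by rewrite {1}E addNr.
by move/eqP; rewrite -mulr2n mulrn_eq0 /= => /eqP.
Qed.

Lemma bdry_bdry c P : bdry (bdry c) P = 0.
Proof.
have inner : forall l, ~~ (P l).2 -> forall x, bdry c (cube_set P l (x, true)) =
  \sum_(l' < n | ~~ (P l').2 && (l' != l)) sg P l' * (-1) ^+ (l < l')%N *
    (c (cube_set (cube_set P l (x, true)) l' ((P l').1 - 1, true))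
   - c (cube_set (cube_set P l (x, true)) l' ((P l').1, true))).
  move=> l Hl x; rewrite bdryE; apply: eq_big => l'.
    by case: (eqVneq l' l) => [->|l'l]; rewrite ?cs_same ?cs_other ?andbF ?andbT.
  move=> H; have l'l : l' != l by apply: contraNneq H => ->; rewrite cs_same.
  by rewrite cs_other // sg_cs (negbTE Hl) ft /= andbT.
rewrite bdryE.
rewrite (eq_bigr (fun l => \sum_(l' < n | ~~ (P l').2 && (l' != l))
   sg P l * (sg P l' * (-1) ^+ (l < l')%N *
     (c (cube_set (cube_set P l ((P l).1 - 1, true)) l' ((P l').1 - 1, true))
    - c (cube_set (cube_set P l ((P l).1 - 1, true)) l' ((P l').1, true))
    - c (cube_set (cube_set P l ((P l).1, true)) l' ((P l').1 - 1, true))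
    + c (cube_set (cube_set P l ((P l).1, true)) l' ((P l').1, true)))))); last first.
  move=> l Hl; rewrite !inner // -sumrB mulr_sumr; apply: eq_bigr => l' _.
  ring.
apply: (@sum_antisym (fun i => ~~ (P i).2)) => l l' ll.
rewrite !(cs_comm _ _ _ ll).
have -> : ((-1) ^+ (l' < l)%N : int) = - (-1) ^+ (l < l')%N.
  by apply/eqP; rewrite -addr_eq0 addrC sign_cancel.
ring.
Qed.


Lemma dimE P : cube_dim P = (\sum_(l < n) (P l).2)%N.
Proof.
rewrite /cube_dim -sum1_card big_mkcond /=; apply: eq_bigr => i _.
case: (boolP (i \in _)) => [/set_mem -> // | H].
move: H; case E: (P i).2 => //; move=> /negP; case; apply/mem_set; exact: E.
Qed.

Lemma dim_cs P m v :
  (cube_dim (cube_set P m v) + (P m).2 = cube_dim P + v.2)%N.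
Proof.
rewrite !dimE (bigD1 m) //= [X in (_ = X + _)%N](bigD1 m) //= cs_same.
have -> : (\sum_(i < n | i != m) (cube_set P m v i).2 =
          \sum_(i < n | i != m) (P i).2)%N.
  by apply: eq_bigr => i im; rewrite cs_other.
by rewrite addnC addnA [in RHS]addnAC.
Qed.

Lemma bdry_ext c1 c2 : c1 =1 c2 -> forall P, bdry c1 P = bdry c2 P.
Proof. by move=> E P; rewrite !bdryE; apply: eq_bigr => l _; rewrite !E. Qed.

Lemma bdry_sub c d P : bdry (fun Q => c Q - d Q) P = bdry c P - bdry d P.
Proof. by rewrite !bdryE -sumrB; apply: eq_bigr => l _; ring. Qed.

Lemma bdry_add c d P : bdry (fun Q => c Q + d Q) P = bdry c P + bdry d P.
Proof. by rewrite !bdryE -big_split; apply: eq_bigr => l _ /=; ring. Qed.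

Lemma bdry0 P : bdry (fun _ => 0) P = 0.
Proof. by rewrite bdryE big1 // => l _; rewrite subrr mulr0. Qed.

Definition good (S : pred (cube n)) (dm : nat) (c : chain n) :=
  (exists s : seq (cube n), forall Q, c Q != 0 -> Q \in s) /\
  (forall Q, c Q != 0 -> cube_dim Q = dm /\ S Q).

Lemma good_hop t m (S S2 : pred (cube n)) dm c : good S dm c ->
  (forall P, P m = (0, true) -> S (cube_set P m (srcv t)) -> S2 P) ->
  good S2 dm.+1 (hop t m c).
Proof.
move=> [[s Hs] H] HS; split.
  exists (map (fun Q => cube_set Q m (0, true)) s) => Q.
  rewrite /hop; case: ifP => [/eqP QE|_]; last by rewrite eqxx.
  move=> nz; have nz' : c (cube_set Q m (srcv t)) != 0.
    by apply: contraNneq nz => ->; rewrite mulr0.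
  apply/mapP; exists (cube_set Q m (srcv t)); first exact: Hs.
  by rewrite cs_cs -QE cs_id.
move=> Q; rewrite /hop; case: ifP => [/eqP QE|_]; last by rewrite eqxx.
move=> nz; have nz' : c (cube_set Q m (srcv t)) != 0.
  by apply: contraNneq nz => ->; rewrite mulr0.
have [d1 S1] := H _ nz'; split; last exact: HS.
have := dim_cs Q m (srcv t); rewrite QE /= d1 addn0 addn1 => <- //.
Qed.

Lemma good_rop t m (S S3 : pred (cube n)) dm c : good S dm c ->
  (forall P, P m = tgtv t -> S P \/ S (cube_set P m (srcv t)) -> S3 P) ->
  good S3 dm (rop t m c).
Proof.
move=> [[s Hs] H] HS; split.
  exists (s ++ map (fun Q => cube_set Q m (tgtv t)) s) => Q.
  rewrite /rop; case: ifP => [/eqP QE|_]; last by rewrite eqxx.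
  rewrite mem_cat; case: (eqVneq (c Q) 0) => [->|nz _]; last by rewrite Hs.
  rewrite add0r => nz; apply/orP; right.
  apply/mapP; exists (cube_set Q m (srcv t)); first exact: Hs.
  by rewrite cs_cs -QE cs_id.
move=> Q; rewrite /rop; case: ifP => [/eqP QE|_]; last by rewrite eqxx.
case: (eqVneq (c Q) 0) => [->|nz _].
  rewrite add0r => nz; have [d1 S1] := H _ nz; split; last by apply: HS => //; right.
  have := dim_cs Q m (srcv t); rewrite QE /= d1.
  by rewrite !addn0 => ->.
by have [d1 S1] := H _ nz; split => //; apply: HS => //; left.
Qed.

Lemma rop_eq t m c : unitm m c -> (forall P, bdry c P = 0) ->
  forall P, rop t m c P = c P - bdry (hop t m c) P.
Proof.
move=> U Z P; have := homotopy t U P.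
have -> : hop t m (bdry c) P = 0 by rewrite /hop Z mulr0; case: ifP.
by rewrite addr0 => ->; rewrite opprB addrC subrK.
Qed.

Lemma rop_cycle t m c : unitm m c -> (forall P, bdry c P = 0) ->
  forall P, bdry (rop t m c) P = 0.
Proof.
move=> U Z P; rewrite (bdry_ext (rop_eq t U Z)) bdry_sub Z bdry_bdry.
by rewrite subrr.
Qed.

End Comb.

Section XS.
Variables (n k : nat) (e : 'I_n).
Hypothesis ke : (k <= e)%N.
Implicit Types (P Q : cube n) (m l : 'I_n).

Definition unitv (v : int * bool) := [|| v == (0, false), v == (1, false) | v == (0, true)].
Definition inX (Q : cube n) := [&& [forall m, unitv (Q m)],
  [exists i : 'I_n, (i < k)%N && (Q i == (1, false))] &
  [exists j : 'I_n, Q j == (0, false)]].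
Definition inY (Q : cube n) := [&& [forall m, unitv (Q m)],
  [exists i : 'I_n, (i < k)%N && (Q i == (1, false))] & (Q e == (0, false))].
Definition degb (j : nat) (Q : cube n) := [forall l : 'I_n, (l < j)%N ==> ~~ (Q l).2].

Lemma inY_inX Q : inY Q -> inX Q.
Proof.
rewrite /inY /inX => /and3P [-> -> He] /=; apply/existsP; exists e; exact: He.
Qed.

Lemma unitv_cs P m v l : unitv v -> unitv (P l) -> unitv (cube_set P m v l).
Proof. by rewrite csE; case: eqP. Qed.



Lemma units_tr P m v : unitv (P m) -> [forall l, unitv (cube_set P m v l)] ->
  [forall l, unitv (P l)].
Proof.
move=> Pm /forallP H; apply/forallP => l; case: (eqVneq l m) => [->//|lm].
by have := H l; rewrite cs_other.
Qed.

Lemma exi_tr P m v : (P m == (1, false)) || (v != (1, false)) ->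
  [exists i : 'I_n, (i < k)%N && (cube_set P m v i == (1, false))] ->
  [exists i : 'I_n, (i < k)%N && (P i == (1, false))].
Proof.
move=> Hm /existsP [i /andP [ik Hi]]; apply/existsP; exists i; rewrite ik /=.
case: (eqVneq i m) => [im|im]; last by rewrite cs_other in Hi.
subst i; rewrite cs_same in Hi; move: Hm; rewrite Hi orbF //.
Qed.

Lemma degb_tr j P m v : (j <= m)%N -> degb j (cube_set P m v) -> degb j P.
Proof.
move=> jm /forallP H; apply/forallP => l; apply/implyP => lj.
have lm : l != m by apply: contraTneq lj => ->; rewrite -leqNgt.
by have := H l; rewrite cs_other // lj.
Qed.

Lemma degb_tr2 j P m v : (j <= m)%N -> degb j P -> degb j (cube_set P m v).
Proof.
move=> jm /forallP H; apply/forallP => l; apply/implyP => lj.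
have lm : l != m by apply: contraTneq lj => ->; rewrite -leqNgt.
by rewrite cs_other // (implyP (H l)).
Qed.

Lemma degb_S j P m : val m = j -> ~~ (P m).2 -> degb j P -> degb j.+1 P.
Proof.
move=> mj Hm /forallP H; apply/forallP => l; apply/implyP; rewrite ltnS leq_eqVlt.
case/orP => [/eqP lj|lj]; last exact: (implyP (H l)).
by have -> : l = m by apply: val_inj; rewrite /= lj mj.
Qed.

Lemma ropY j P m : val m = j -> m != e -> P m = (1, false) ->
  (inY P && degb j P) \/ (inY (cube_set P m (0, false)) && degb j (cube_set P m (0, false))) ->
  inY P && degb j.+1 P.
Proof.
move=> mj me Pm H.
have [YP dP] : inY P /\ degb j P.
  case: H => [/andP [] //|/andP [Y D]]; split; last by apply: degb_tr D; rewrite mj.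
  case/and3P: Y => U X E; apply/and3P; split.
  - by apply: units_tr U; rewrite Pm.
  - by apply: exi_tr X; rewrite Pm eqxx.
  - by rewrite cs_other // eq_sym in E.
by rewrite YP /=; apply: degb_S mj _ dP; rewrite Pm.
Qed.

Lemma hopY j P m : val m = j -> m != e -> P m = (0, true) ->
  inY (cube_set P m (0, false)) && degb j (cube_set P m (0, false)) -> inX P.
Proof.
move=> mj me Pm /andP [Y _]; apply: inY_inX.
case/and3P: Y => U X E; apply/and3P; split.
- by apply: units_tr U; rewrite Pm.
- by apply: exi_tr X; rewrite Pm.
- by rewrite cs_other // eq_sym in E.
Qed.

Lemma ropX P : P e = (0, false) -> inX P \/ inX (cube_set P e (1, false)) ->
  inY P && degb 0 P.
Proof.
move=> Pe H; have -> : degb 0 P by apply/forallP.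
rewrite andbT; apply/and3P; split; last by rewrite Pe.
- by case: H => /and3P [U _ _] //; apply: units_tr U; rewrite Pe.
- case: H => /and3P [_ X _] //; case/existsP: X => i /andP [ik Hi].
  apply/existsP; exists i; rewrite ik.
  have ie : i != e by apply: contraTneq ik => ->; rewrite -leqNgt.
  by rewrite cs_other in Hi.
Qed.

Lemma hopX P : P e = (0, true) -> inX (cube_set P e (1, false)) -> inX P.
Proof.
move=> Pe /and3P [U X Z]; apply/and3P; split.
- by apply: units_tr U; rewrite Pe.
- case/existsP: X => i /andP [ik Hi]; apply/existsP; exists i; rewrite ik.
  have ie : i != e by apply: contraTneq ik => ->; rewrite -leqNgt.
  by rewrite cs_other in Hi.
- case/existsP: Z => j Hj; apply/existsP; exists j.
  case: (eqVneq j e) => [je|je]; last by rewrite cs_other in Hj.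
  by subst j; rewrite cs_same in Hj.
Qed.


Lemma good_add (S : pred (cube n)) dm d1 d2 : good S dm d1 -> good S dm d2 ->
  good S dm (fun P => d1 P + d2 P).
Proof.
move=> [[s1 H1] G1] [[s2 H2] G2]; split.
  exists (s1 ++ s2) => Q nz; rewrite mem_cat.
  case: (eqVneq (d1 Q) 0) => [E|nz1]; last by rewrite H1.
  by rewrite H2 ?orbT //; move: nz; rewrite E add0r.
move=> Q nz; case: (eqVneq (d1 Q) 0) => [E|nz1]; last exact: G1.
by apply: G2; move: nz; rewrite E add0r.
Qed.

Lemma Yphase r : forall j c dm, (r + j = n)%N -> (1 <= dm)%N ->
  good (fun Q => inY Q && degb j Q) dm c -> (forall P, bdry c P = 0) ->
  exists d, good inX dm.+1 d /\ forall P, bdry d P = c P.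
Proof.
elim: r => [|r IH] j c dm rj dm1 [Hs Hg] Z.
  rewrite add0n in rj; subst j.
  have c0 : forall P, c P = 0.
    move=> P; apply/eqP; apply: contraT => nz; have [D /andP [_ Dg]] := Hg P nz.
    have : cube_dim P = 0%N.
      rewrite dimE big1 // => l _.
      by have := implyP (forallP Dg l) (ltn_ord l); case: (P l).2.
    by rewrite D => dm0; move: dm1; rewrite dm0.
  exists (fun _ => 0); split.
    by split; [exists [::] => Q; rewrite eqxx | move=> Q; rewrite eqxx].
  by move=> P; rewrite bdry0 c0.
have jn : (j < n)%N by rewrite -rj addSn ltnS leq_addl.
pose m := Ordinal jn.
have U : unitm m c.
  by move=> P nz; have [_ /andP [/and3P [/forallP u _ _] _]] := Hg P nz; exact: u m.
case: (eqVneq m e) => [me|me].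
  apply: (IH j.+1) => //; first by rewrite -addSnnS.
  split => // Q nz; have [D /andP [Y Dg]] := Hg Q nz; split => //; rewrite Y /=.
  apply: (degb_S (m := m)) => //; rewrite me.
  by case/and3P: Y => _ _ /eqP ->.
have g' : good (fun Q => inY Q && degb j.+1 Q) dm (rop true m c).
  apply: (good_rop (conj Hs Hg)) => P Pm H.
  by apply: (ropY (m := m)).
have [d' [gd' bd']] := IH j.+1 (rop true m c) dm ltac:(by rewrite -addSnnS) dm1 g'
   (rop_cycle true U Z).
exists (fun P => d' P + hop true m c P); split.
  apply: good_add => //; apply: (good_hop (conj Hs Hg)) => P Pm H.
  by apply: (hopY (m := m) (j := j)).
by move=> P; rewrite bdry_add bd' (rop_eq true U Z) subrK.
Qed.

Lemma Xphase c dm : (1 <= dm)%N -> good inX dm c -> (forall P, bdry c P = 0) ->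
  exists d, good inX dm.+1 d /\ forall P, bdry d P = c P.
Proof.
move=> dm1 [Hs Hg] Z.
have U : unitm e c.
  by move=> P nz; have [_ /and3P [/forallP u _ _]] := Hg P nz; exact: u e.
have g' : good (fun Q => inY Q && degb 0 Q) dm (rop false e c).
  apply: (good_rop (conj Hs Hg)) => P Pm H.
  by apply: ropX.
have [d' [gd' bd']] := @Yphase n 0%N (rop false e c) dm (addn0 n) dm1 g'
   (rop_cycle false U Z).
exists (fun P => d' P + hop false e c P); split.
  apply: good_add => //; apply: (good_hop (conj Hs Hg)) => P Pm H.
  exact: hopX.
by move=> P; rewrite bdry_add bd' (rop_eq false U Z) subrK.
Qed.

End XS.

Local Open Scope classical_set_scope.

Section Geo.
Variable R : realType.
Variable n : nat.

Definition seg (a b : 'rV[R]_n) : set 'rV[R]_n :=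
  (fun t : R => a + t *: (b - a)) @` `[0, 1].

Lemma seg_connected a b : connected (seg a b).
Proof.
apply: connected_continuous_connected; first exact: segment_connected.
apply: continuous_subspaceT => t.
have -> : (fun t : R => a + t *: (b - a)) = (cst a) + (fun t => t *: (b - a)) by [].
apply: continuousD; first exact: cst_continuous.
by apply: continuousZr_tmp.
Qed.

Lemma seg_l a b : seg a b a.
Proof. by exists 0; [rewrite /= in_itv /= lexx ler01 | rewrite scale0r addr0]. Qed.

Lemma seg_r a b : seg a b b.
Proof. by exists 1; [rewrite /= in_itv /= lexx ler01 | rewrite scale1r addrC subrK]. Qed.


Definition F (i j : 'I_n) := bool_interval_real (R:=R) [set i] (~: [set j]).

Lemma F_intro i j (x : 'rV[R]_n) : j != i -> x ord0 i = 1 -> x ord0 j = 0 ->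
  (forall m, 0 <= x ord0 m <= 1) -> F i j x.
Proof.
move=> ji xi xj xb m; split; [|split].
- by rewrite finset.in_set1 => /eqP ->.
- by move=> _ _; exact: xb.
- by rewrite finset.in_setC finset.in_set1 negbK => /eqP ->.
Qed.

Lemma F_elim i j (x : 'rV[R]_n) : j != i -> F i j x ->
  [/\ x ord0 i = 1, x ord0 j = 0 & forall m, 0 <= x ord0 m <= 1].
Proof.
move=> ji Fx; split.
- by have [+ _] := Fx i; apply; rewrite finset.in_set1.
- by have [_ [_ +]] := Fx j; apply; rewrite finset.in_setC finset.in_set1 negbK.
- move=> m; have [h1 [h2 h3]] := Fx m.
  case: (eqVneq m i) => [mi|mi]; first by subst m; rewrite h1 ?finset.in_set1 // ler01 lexx.
  case: (eqVneq m j) => [mj|mj]; first by subst m; rewrite h3 ?finset.in_setC ?finset.in_set1 ?negbK // lexx ler01.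
  by apply: h2; rewrite ?finset.in_setC finset.in_set1 ?mj ?mi.
Qed.

Lemma seg_F i j a b : j != i -> F i j a -> F i j b -> seg a b `<=` F i j.
Proof.
move=> ji /(F_elim ji) [ai aj ab] /(F_elim ji) [bi bj bb] x [t].
rewrite /= in_itv /= => /andP [t0 t1] <-.
apply: F_intro => //; rewrite ?mxE ?ai ?bi ?aj ?bj; first by rewrite subrr mulr0 addr0.
  by rewrite subrr mulr0 addr0.
move=> m; rewrite !mxE; have /andP [a0 a1] := ab m; have /andP [b0 b1] := bb m.
apply/andP; split; nra.
Qed.

End Geo.

Section Geo2.
Variables (R : realType) (n k : nat) (eN : 'I_n).
Hypotheses (ke : (k <= eN)%N) (k0 : (0 < k)%N).

Definition ev (i : 'I_n) : 'rV[R]_n := \row_m (if m == i then 1 else 0).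
Definition qv : 'rV[R]_n := \row_m (if (m < k)%N then 1 else 0).

Lemma ev_F (i j : 'I_n) : j != i -> F i j (ev i).
Proof.
move=> ji; apply: F_intro => //; rewrite ?mxE ?eqxx ?(negbTE ji) //.
by move=> m; rewrite mxE; case: (m == i); rewrite lexx ler01.
Qed.

Lemma ne_eN (i : 'I_n) : (i < k)%N -> eN != i.
Proof. by move=> ik; apply: contraTneq ik => <-; rewrite -leqNgt. Qed.

Lemma qv_F (i : 'I_n) : (i < k)%N -> F i eN qv.
Proof.
move=> ik; apply: F_intro; rewrite ?mxE ?ik //; first exact: ne_eN.
  by rewrite ltnNge ke.
by move=> m; rewrite mxE; case: (m < k)%N; rewrite lexx ler01.
Qed.

Lemma X_ne : lemma3_set (R:=R) (n:=n) k !=set0.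
Proof.
pose i0 : 'I_n := Ordinal (leq_ltn_trans (leq0n eN) (ltn_ord eN)).
have ik : (i0 < k)%N by [].
by exists qv; exists i0 => //; exists eN; [exact: ne_eN | exact: qv_F].
Qed.

Lemma X_conn : connected (lemma3_set (R:=R) (n:=n) k).
Proof.
have -> : lemma3_set (R:=R) (n:=n) k = \bigcup_(p in [set p : 'I_n * 'I_n * 'rV[R]_n |
     (p.1.1 < k)%N /\ p.1.2 != p.1.1 /\ F p.1.1 p.1.2 p.2])
     (seg qv (ev p.1.1) `|` seg (ev p.1.1) p.2).
  apply/seteqP; split.
    move=> x [i /= ik [j /= ji Fx]]; exists (i, j, x) => //=; right; exact: seg_r.
  move=> x [[[i j] y] /= [ik [ji Fy]]] [] Hx.
    exists i => //; exists eN; first exact: ne_eN.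
    by apply: (seg_F (ne_eN ik) _ _ Hx); [exact: qv_F | exact: ev_F (ne_eN ik)].
  exists i => //; exists j => //.
  by apply: (seg_F ji _ _ Hx) => //; exact: ev_F.
apply: bigcup_connected.
  by exists qv => p _; left; exact: seg_l.
move=> p _; apply: connectedU; last 2 first.
- exact: seg_connected.
- exact: seg_connected.
by exists (ev p.1.1); split; [exact: seg_r | exact: seg_l].
Qed.

End Geo2.

Section Geo3.
Variables (R : realType) (n k : nat).

Lemma int_trich (a : int) :
  [\/ (a%:~R <= -1 :> R), a = 0, a = 1 | (2 <= a%:~R :> R)].
Proof.
have : (a <= -1)%R \/ a = 0 \/ a = 1 \/ (2 <= a)%R by lia.
case => [h|[->|[->|h]]]; [apply: Or41 | apply: Or42 | apply: Or43 | apply: Or44] => //.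
  by have : (a%:~R <= (-1)%:~R :> R) by rewrite ler_int.
by have : ((2 : int)%:~R <= a%:~R :> R) by rewrite ler_int.
Qed.

Lemma cast_bounds (v : int * bool) (x : R) : unitv v ->
  v.1%:~R <= x <= v.1%:~R + v.2%:R ->
  [/\ v = (0, false) -> x = 0, v = (1, false) -> x = 1 & 0 <= x <= 1].
Proof.
case/or3P => /eqP -> /=; rewrite ?mulr0n ?mulr1n ?mulr0z ?mulr1z => /andP [h1 h2];
  (split; [move=> E | move=> E | apply/andP; split]); try (by case: E); lra.
Qed.

Lemma half_eq1 (v : int * bool) : v.1%:~R + v.2%:R / 2 = 1 :> R -> v = (1, false).
Proof.
case: v => a b /=; case: (int_trich a) => [h|->|->|h]; case: b => //=;
  rewrite ?mulr0n ?mulr1n ?mulr0z ?mulr1z => H; exfalso; lra.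
Qed.

Lemma half_eq0 (v : int * bool) : v.1%:~R + v.2%:R / 2 = 0 :> R -> v = (0, false).
Proof.
case: v => a b /=; case: (int_trich a) => [h|->|->|h]; case: b => //=;
  rewrite ?mulr0n ?mulr1n ?mulr0z ?mulr1z => H; exfalso; lra.
Qed.

Lemma half_unit (v : int * bool) : 0 <= (v.1%:~R + v.2%:R / 2 : R) <= 1 -> unitv v.
Proof.
case: v => a b /=; case: (int_trich a) => [h|->|->|h]; case: b => //=;
  rewrite ?mulr0n ?mulr1n ?mulr0z ?mulr1z => /andP [h1 h2]; exfalso; lra.
Qed.

Lemma inX_sub (Q : cube n) : inX k Q -> cube_real (R:=R) Q `<=` lemma3_set (n:=n) k.
Proof.
case/and3P => [/forallP U /existsP [i /andP [ik /eqP Qi]] /existsP [j /eqP Qj]] x hx.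
have ji : j != i by apply/eqP => E; move: Qj; rewrite E Qi.
exists i => //; exists j => //; apply: F_intro => //.
- by have [_ + _] := cast_bounds (U i) (hx i); apply.
- by have [+ _ _] := cast_bounds (U j) (hx j); apply.
- by move=> m; have [_ _ +] := cast_bounds (U m) (hx m).
Qed.

Lemma sub_inX (Q : cube n) : cube_real (R:=R) Q `<=` lemma3_set (n:=n) k -> inX k Q.
Proof.
move=> H.
pose xc : 'rV[R]_n := \row_m ((Q m).1%:~R + (Q m).2%:R / 2).
have cx : cube_real Q xc.
  move=> m; rewrite mxE; case: (Q m).2 => /=; rewrite ?mulr0n ?mulr1n;
  apply/andP; split; lra.
have [i /= ik [j /= ji Fx]] := H xc cx.
have [xi xj xb] := F_elim ji Fx.
apply/and3P; split.
- by apply/forallP => m; apply: half_unit; have := xb m; rewrite mxE.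
- by apply/existsP; exists i; rewrite ik; apply/eqP; apply: half_eq1; rewrite -[RHS]xi mxE.
- by apply/existsP; exists j; apply/eqP; apply: half_eq0; rewrite -[RHS]xj mxE.
Qed.

End Geo3.

Theorem lemma3 (R : realType) (n k : nat) :
  (2 <= n)%N -> (1 <= k)%N -> (k < n)%N -> acyclic (@lemma3_set R n k).
Proof.
move=> n2 k1 kn.
have n0 : (n.-1 < n)%N by case: (n) n2.
pose eN := Ordinal n0.
have ke : (k <= eN)%N by rewrite /= -ltnS prednK // (leq_trans _ n2).
split; first exact: (@X_ne R n k eN ke k1).
split; first exact: (@X_conn R n k eN ke).
move=> dm dm1 c [Hs Hg] Z.
have g : good (inX k) dm c.
  split => // Q nz; have [D S] := Hg Q nz; split => //; exact: sub_inX S.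
have Z' : forall P, bdry c P = 0 by move=> P; rewrite Z.
have [d [[ds dg] bd]] := Xphase ke dm1 g Z'.
exists d; split.
  split => // Q nz; have [D S] := dg Q nz; split => //; exact: inX_sub.
by apply/funext => P; rewrite bd.
Qed.
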